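(* Let $D$ be a finite domain and let $\mathcal F$ be a family of functions of the form $f:D^L\to D$. Then there exists a finite family $\Lambda$ of promise relations over $D$ in which every member has the form $(P,P)$ (a CSP) such that $\mathcal F=\operatorname{poly}(\Lambda)$ if and only if $\mathcal F$ is projection-closed, finitizable, a clone, and contains the identity function $\operatorname{id}_D$.
   Context: A promise relation over $D$ is a pair $(P,Q)$ with $P\subseteq Q\subseteq D^k$. $f:D^L\to D$ is a weak polymorphism of $(P,Q)$ if for all $x^{(1)},\dots,x^{(L)}\in P$, $(f(x^{(1)}_1,\dots,x^{(L)}_1),\dots,f(x^{(1)}_k,\dots,x^{(L)}_k))\in Q$; $\operatorname{poly}(\Lambda)$ is the set of functions that are weak polymorphisms of every member of $\Lambda$. For $f:D^L\to D$ and $\pi:[L]\to[R]$, $f^\pi:D^R\to D$ is $f^\pi(y)=f(x)$ with $x_i=y_{\pi(i)}$. $\mathcal F$ is projection-closed if $f^\pi\in\mathcal F$ for all $f\in\mathcal F$ of arity $L$, all $R$, and all $\pi:[L]\to[R]$; finitizable if there is $R\in\mathbb N$ such that for every $L$ and $f:D^L\to D$, $f\in\mathcal F$ iff $f^\pi\in\mathcal F$ for all $\pi:[L]\to[R]$. $\mathcal F$ is a clone if for all $f\in\mathcal F$ of arity $L_1$ and all $g_1,\dots,g_{L_1}\in\mathcal F$ of arity $L_2$, the function $h:D^{L_1L_2}\to D$, $h(x^{(1)},\dots,x^{(L_1)})=f(g_1(x^{(1)}),\dots,g_{L_1}(x^{(L_1)}))$ (with $x^{(j)}\in D^{L_2}$),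 is in $\mathcal F$. $\operatorname{id}_D(x)=x$. *)

(* Defs.v *)
From HB Require Import structures.
From mathcomp Require Import all_boot.
From mathcomp Require Import zify.

Set Implicit Arguments.
Unset Strict Implicit.
Unset Printing Implicit Defensive.

(* A function f : D^L -> D, stored as a finite function (so equality is
   extensional). Coordinates of D^L are indexed by 'I_L. *)
Definition fn (D : finType) (L : nat) := {ffun {ffun 'I_L -> D} -> D}.

Record prel (D : finType) := Prel {
  prel_ar : nat;
  prel_P : {set {ffun 'I_prel_ar -> D}};
  prel_Q : {set {ffun 'I_prel_ar -> D}};
  prel_sub : prel_P \subset prel_Q }.

Definition is_csp (D : finType) (r : prel D) : Prop := prel_P r = prel_Q r.

Definition weak_poly (D : finType) (L : nat) (f : fn D L) (r : prel D) : Prop :=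
  forall x : 'I_L -> {ffun 'I_(prel_ar r) -> D},
    (forall l, x l \in prel_P r) ->
    [ffun c => f [ffun l => x l c]] \in prel_Q r.

Definition poly (D : finType) (Lam : seq (prel D)) (L : nat) (f : fn D L) : Prop :=
  forall r, List.In r Lam -> weak_poly f r.

Definition minor (D : finType) (L R : nat) (f : fn D L) (pi : 'I_L -> 'I_R)
  : fn D R := [ffun y : {ffun 'I_R -> D} => f [ffun i => y (pi i)]].

Definition fnfamily (D : finType) := forall L : nat, fn D L -> Prop.

Definition projection_closed (D : finType) (F : fnfamily D) : Prop :=
  forall L R (f : fn D L) (pi : 'I_L -> 'I_R),
    0 < L -> F L f -> F R (minor f pi).

Definition finitizable (D : finType) (F : fnfamily D) : Prop :=
  exists R : nat, forall L (f : fn D L), 0 < L ->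
    (F L f <-> forall pi : 'I_L -> 'I_R, F R (minor f pi)).

Lemma block_index_subproof (L1 L2 : nat) (j : 'I_L1) (i : 'I_L2) :
  j * L2 + i < L1 * L2.
Proof. have := ltn_ord j; have := ltn_ord i; nia. Qed.

Definition block_index (L1 L2 : nat) (j : 'I_L1) (i : 'I_L2) : 'I_(L1 * L2) :=
  Ordinal (block_index_subproof j i).

Definition clone_comp (D : finType) (L1 L2 : nat) (f : fn D L1)
  (g : 'I_L1 -> fn D L2) : fn D (L1 * L2) :=
  [ffun x : {ffun 'I_(L1 * L2) -> D} =>
     f [ffun j => g j [ffun i => x (block_index j i)]]].

Definition is_clone (D : finType) (F : fnfamily D) : Prop :=
  forall L1 L2 (f : fn D L1) (g : 'I_L1 -> fn D L2),
    0 < L1 -> 0 < L2 -> F L1 f -> (forall j, F L2 (g j)) ->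
    F (L1 * L2) (clone_comp f g).

Definition idD (D : finType) : fn D 1 := [ffun x : {ffun 'I_1 -> D} => x ord0].

Definition fam_eq (D : finType) (F G : fnfamily D) : Prop :=
  forall L (f : fn D L), 0 < L -> (F L f <-> G L f).

(* Main.v *)
Require Import Defs.
From HB Require Import structures.
From mathcomp Require Import all_boot.
From Stdlib Require Import ClassicalEpsilon.

Set Implicit Arguments.
Unset Strict Implicit.
Unset Printing Implicit Defensive.

Lemma memE (T : finType) (S : {set T}) a b : b \in S -> a = b -> a \in S.
Proof. by move=> H ->. Qed.

Section Dir1.
Variable D : finType.
Variable Lam : seq (prel D).
Hypothesis Hcsp : forall r, List.In r Lam -> is_csp r.

Lemma poly_minor L R (f : fn D L) (pi : 'I_L -> 'I_R) :
  poly Lam f -> poly Lam (minor f pi).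
Proof.
move=> Hf r Hr x Hx.
apply: (memE (Hf r Hr (fun l => x (pi l)) (fun l => Hx (pi l)))). apply/ffunP => c; rewrite !ffunE; congr (f _).
by apply/ffunP => l; rewrite !ffunE.
Qed.

Lemma poly_clone L1 L2 (f : fn D L1) (g : 'I_L1 -> fn D L2) :
  poly Lam f -> (forall j, poly Lam (g j)) -> poly Lam (clone_comp f g).
Proof.
move=> Hf Hg r Hr x Hx.
pose z j := [ffun c => g j [ffun i => x (block_index j i) c]].
have Hz : forall j, z j \in prel_P r.
  move=> j; rewrite (Hcsp Hr); exact: (Hg j r Hr (fun i => x (block_index j i))).
apply: (memE (Hf r Hr z Hz)). apply/ffunP => c; rewrite !ffunE; congr (f _).
apply/ffunP => j; rewrite !ffunE; congr (g j _).
by apply/ffunP => i; rewrite !ffunE.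
Qed.

Lemma poly_id : poly Lam (idD D).
Proof.
move=> r Hr x Hx; rewrite -(Hcsp Hr).
have -> : [ffun c => idD D [ffun l => x l c]] = x ord0.
  by apply/ffunP => c; rewrite !ffunE.
exact: Hx.
Qed.

Definition Rb := (sumn [seq #|{ffun 'I_(prel_ar r) -> D}| | r <- Lam]).+1.

Lemma Rb_ge r : List.In r Lam -> #|{ffun 'I_(prel_ar r) -> D}| <= Rb.
Proof.
rewrite /Rb; elim: Lam => [|r' s IH] //= [->|H].
  by apply: leqW; apply: leq_addr.
have := IH H => h; apply: (leq_trans h); rewrite ltnS; apply: leq_addl.
Qed.

Lemma poly_fin L (f : fn D L) : 0 < L ->
  (poly Lam f <-> forall pi : 'I_L -> 'I_Rb, poly Lam (minor f pi)).
Proof.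
move=> L0; split; first by move=> H pi; apply: poly_minor.
move=> H r Hr x Hx.
have hT := Rb_ge Hr.
pose pi l := widen_ord hT (enum_rank (x l)).
pose l0 : 'I_L := Ordinal L0.
pose y j := if [pick l | pi l == j] is Some l then x l else x l0.
have Hy : forall j, y j \in prel_P r.
  by move=> j; rewrite /y; case: pickP.
have Eyx : forall l, y (pi l) = x l.
  move=> l; rewrite /y; case: pickP => [l' /eqP e|none]; last by have := none l; rewrite eqxx.
  have e2 : enum_rank (x l') = enum_rank (x l) by apply: val_inj; move: e => /(congr1 val).
  exact: enum_rank_inj e2.
apply: (memE (H pi r Hr y Hy)).
apply/ffunP => c; rewrite !ffunE; congr (f _).
by apply/ffunP => l; rewrite !ffunE Eyx.
Qed.

End Dir1.

Definition pb (P : Prop) : bool := if excluded_middle_informative P then true else false.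
Lemma pbP (P : Prop) : reflect P (pb P).
Proof. by rewrite /pb; case: excluded_middle_informative => h; constructor. Qed.

Section Dir2.
Variable D : finType.
Variable F : fnfamily D.
Variable R : nat.

Definition ttab (g : fn D R) : {ffun 'I_#|{ffun 'I_R -> D}| -> D} :=
  [ffun c => g (enum_val c)].

Definition GammaP : {set {ffun 'I_#|{ffun 'I_R -> D}| -> D}} :=
  [set t | pb (exists g, @F R g /\ t = ttab g)].

Definition Gamma : prel D := @Prel D #|{ffun 'I_R -> D}| GammaP GammaP (subxx _).

End Dir2.

Theorem lemmaE4 (D : finType) (F : fnfamily D) :
  (exists Lam : seq (prel D),
     (forall r, List.In r Lam -> is_csp r) /\ fam_eq F (@poly D Lam))
  <->
  [/\ projection_closed F, finitizable F, is_clone F & F 1 (idD D)].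
Proof.
split.
  move=> [Lam [Hcsp Heq]]; split.
  - move=> L R f pi L0 Ff.
    have R0 : 0 < R by case: R pi => [|R] pi //; case: (pi (Ordinal L0)).
    apply/(Heq _ _ R0); apply: poly_minor; exact/(Heq _ _ L0).
  - exists (Rb Lam) => L f L0; rewrite (Heq _ _ L0) (@poly_fin D Lam L f L0).
    have Rb0 : 0 < Rb Lam by [].
    by split=> H pi; [apply/(Heq _ _ Rb0); apply: H | apply/(Heq _ _ Rb0); apply: H].
  - move=> L1 L2 f g L10 L20 Ff Fg.
    have LL : 0 < L1 * L2 by rewrite muln_gt0 L10 L20.
    apply/(Heq _ _ LL).
    apply: poly_clone => //; first exact/(Heq _ _ L10).
    by move=> j; apply/(Heq _ _ L20).
  - by apply/(Heq _ _ (ltn0Sn 0)); apply: poly_id.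
move=> [Hpc [R HR] Hcl Hid].
case: R HR => [|R'] HR.
  exists [::]; split; first by [].
  move=> L f L0; split=> _; first by move=> r [].
  by apply/(HR L f L0) => pi; case: (pi (Ordinal L0)).
move: (ltn0Sn R') HR; move: R'.+1 => R R0 HR.
exists [:: Gamma F R]; split; first by move=> r [<-|[]].
move=> L f L0; split.
  move=> Ff r [<-|[]] x Hx.
  have Hg : forall l, exists g, F R g /\ x l = ttab g.
    by move=> l; have := Hx l; rewrite inE => /pbP.
  pose g l := proj1_sig (constructive_indefinite_description _ (Hg l)).
  have gP : forall l, F R (g l) /\ x l = ttab (g l).
    by move=> l; rewrite /g; case: constructive_indefinite_description.
  pose pimod (k : 'I_(L * R)) : 'I_R := Ordinal (ltn_pmod k R0).
  have LR0 : 0 < L * R by rewrite muln_gt0 L0.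
  rewrite inE; apply/pbP; exists (minor (clone_comp f g) pimod); split.
    apply: Hpc => //; apply: Hcl => // j; exact: (gP j).1.
  apply/ffunP => c; rewrite !ffunE; congr (f _).
  apply/ffunP => j; rewrite !ffunE (gP j).2 !ffunE; congr (g j _).
  apply/ffunP => i; rewrite !ffunE; congr (enum_val c _).
  by apply: val_inj => /=; rewrite modnMDl modn_small.
move=> Hp; apply/(HR L f L0) => pi.
pose proj (i : 'I_R) : fn D R := [ffun y : {ffun 'I_R -> D} => y i].
have Fproj : forall i, F R (proj i).
  move=> i; have -> : proj i = minor (idD D) (fun _ => i).
    by apply/ffunP => y; rewrite !ffunE.
  by apply: Hpc.
pose x l := ttab (proj (pi l)).
have Hx : forall l, x l \in GammaP F R.
  by move=> l; rewrite inE; apply/pbP; exists (proj (pi l)).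
have := Hp _ (or_introl erefl) x Hx.
rewrite inE => /pbP [g [Fg Eg]].
suff -> : minor f pi = g by [].
apply/ffunP => y.
move/ffunP: Eg => /(_ (enum_rank y)); rewrite !ffunE enum_rankK => <-.
congr (f _); apply/ffunP => l; by rewrite !ffunE enum_rankK.
Qed.
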